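(* Let $\mathcal D=(A,D)$ be a dependence alphabet and $\mathcal P=(Q,\Delta)$ a pushdown system satisfying (P1): $D(w)\subseteq D(a)$ for every $(p,a,w,q)\in\Delta$. Then the following are equivalent: (P2') for all $(p,a,v,q),(q,b,w,r)\in\Delta$ with $av\parallel bw$, there is a state $q'\in Q$ with $(p,b,w,q'),(q',a,v,r)\in\Delta$; (P2) for all $(p,a,v,q),(q,b,w,r)\in\Delta$ with $a\parallel b$, there is a state $q'\in Q$ with $(p,b,w,q'),(q',a,v,r)\in\Delta$.
   Context: A dependence alphabet is $\mathcal D=(A,D)$, $A$ finite, $D\subseteq A\times A$ reflexive and symmetric. For $a\in A$, $D(a)=\{c\mid(a,c)\in D\}$; for a word $w$, $D(w)$ is the union of $D(c)$ over the letters $c$ of $w$. Letters $x,y$ are independent if $(x,y)\notin D$; for words $u,v$ write $u\parallel v$ if every letter occurring in $u$ is independent of every letter occurring in $v$. A pushdown system is a pair $(Q,\Delta)$ with $Q$ a finite set of states and $\Delta\subseteq Q\times A\times A^*\times Q$ a finite set of transitions. *)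

(* Defs.v *)
From mathcomp Require Import all_boot.
Set Implicit Arguments. Unset Strict Implicit. Unset Printing Implicit Defensive.

Definition dep_alphabet (A : finType) (D : rel A) : Prop :=
  reflexive D /\ symmetric D.

Definition Dset (A : finType) (D : rel A) (a : A) : {set A} := [set c | D a c].

Definition Dword (A : finType) (D : rel A) (w : seq A) : {set A} :=
  \bigcup_(c <- w) Dset D c.

Definition indep (A : finType) (D : rel A) (x y : A) : bool := ~~ D x y.

Definition par (A : finType) (D : rel A) (u v : seq A) : bool :=
  all (fun x => all (fun y => indep D x y) v) u.

(* A pushdown system: finite state set Q and finite set of transitions
   (p, a, w, q), represented by a finite list. *)
Definition transition (Q A : Type) : Type := (Q * A * seq A * Q)%type.

Definition P1 (Q A : finType) (D : rel A) (Delta : seq (transition Q A)) : Prop :=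
  forall p a w q, (p, a, w, q) \in Delta -> Dword D w \subset Dset D a.

Definition P2' (Q A : finType) (D : rel A) (Delta : seq (transition Q A)) : Prop :=
  forall p a v q b w r, (p, a, v, q) \in Delta -> (q, b, w, r) \in Delta ->
    par D (a :: v) (b :: w) ->
    exists q' : Q, (p, b, w, q') \in Delta /\ (q', a, v, r) \in Delta.

Definition P2 (Q A : finType) (D : rel A) (Delta : seq (transition Q A)) : Prop :=
  forall p a v q b w r, (p, a, v, q) \in Delta -> (q, b, w, r) \in Delta ->
    par D [:: a] [:: b] ->
    exists q' : Q, (p, b, w, q') \in Delta /\ (q', a, v, r) \in Delta.

(* Main.v *)
Require Import Defs.
From mathcomp Require Import all_boot.

Lemma inDword (A : finType) (D : rel A) (w : seq A) x y :
  x \in w -> D x y -> y \in Dword D w.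
Proof.
rewrite /Dword; elim: w => [|c w IH] //=.
rewrite inE big_cons in_setU => /orP [/eqP -> Hd|Hx Hd].
  by rewrite /Dset inE Hd.
by rewrite IH ?orbT.
Qed.

Theorem lemma3p5 (A : finType) (D : rel A) (Q : finType)
    (Delta : seq (Q * A * seq A * Q)) :
  dep_alphabet D -> P1 D Delta -> (P2' D Delta <-> P2 D Delta).
Proof.
move=> [Dr Ds] HP1; split.
- move=> H p a v q b w r H1 H2 Hp; apply: (H _ _ _ q) => //.
  move: Hp; rewrite /par /= !andbT => Hab.
  have Sv := HP1 _ _ _ _ H1; have Sw := HP1 _ _ _ _ H2.
  have Dy : forall y, y \in w -> D a y -> False.
    move=> y Hy Hay.
    have : a \in Dword D w by apply: (@inDword _ _ w y a Hy); rewrite Ds.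
    move/(subsetP Sw); rewrite /Dset inE Ds => Hba.
    by move: Hab; rewrite /indep Hba.
  have Dx : forall x, x \in v -> forall y, D x y -> D a y.
    move=> x Hx y Hxy.
    have : y \in Dword D v by move: (@inDword A D v x y Hx Hxy).
    by move/(subsetP Sv); rewrite /Dset inE.
  rewrite Hab /=; apply/andP; split.
    by apply/allP => y Hy; apply/negP => Hay; apply: (Dy y).
  apply/allP => x Hx /=; apply/andP; split.
    by apply/negP => Hxb; move: Hab; rewrite /indep (Dx x Hx b Hxb).
  by apply/allP => y Hy; apply/negP => Hxy; apply: (Dy y Hy (Dx x Hx y Hxy)).
- move=> H p a v q b w r H1 H2 Hp; apply: (H _ _ _ q) => //.
  by move: Hp; rewrite /par /= => /andP [/andP [-> _] _].
Qed.
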